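(* If $Q_1,\dots,Q_n\in\mathbb{E}^d$ are affinely independent, then they have ideal general position and general position with respect to every real, additive gain graph $\Phi$ on $n$ vertices.
   Context: A real, additive gain graph $\Phi$ on $V=\{1,\dots,n\}$: finite graph with edge set $E$ (multiple edges allowed, every edge with two distinct endpoints) and gains $\phi(e;i,j)\in\mathbb{R}$ with $\phi(e;j,i)=-\phi(e;i,j)$. $S\subseteq E$ is balanced if every circle in $S$ has gain sum $0$; $c(S)$ counts components of $(V,S)$, isolated vertices included. With $\psi_{ij}(P)=d(P,Q_i)^2-d(P,Q_j)^2$, $\mathcal{H}(\Phi;\mathbf{Q})$ consists of hyperplanes $h(e)=\{P:\psi_{ij}(P)=\phi(e;i,j)\}$ for edges $e$ with endpoints $i,j$. $\mathcal{L}(\mathcal{H})$: nonempty intersections of subsets of $\mathcal{H}$ (including $\mathbb{E}^d$) ordered by reverse inclusion; $E(s)=\{e:h(e)\supseteq s\}$. Ideal general position: the points are distinct and, with $\mathbb{E}^d\subset\mathbb{P}^d$, $h_\infty$ the ideal hyperplane and $p_{ij}$ the ideal point of line $Q_iQ_j$, for every set $T$ of unordered pairs the projective span of $\{p_{ij}:\{i,j\}\in T\}$ has dimension $\min(n-c(T),d)-1$, $c(T)$ the number of components of $(\{1,\dots,n\},T)$. Balanced flat: balanced $S\subseteq E$ such that every $e\notin S$ with both endpoints in one component of $(V,S)$ makes $S\cup\{e\}$ unbalanced; rank $n-c(S)$. General position w.r.t. $\Phi$: $s\mapsto E(s)$ is a poset isomorphism from $\mathcal{L}(\mathcal{H}(\Phi;\mathbf{Q}))$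 onto the poset (by inclusion) of balanced flats of rank $\le d$. *)

(* Defs.v *)
From HB Require Import structures.
From mathcomp Require Import all_boot all_order all_algebra.
From mathcomp Require Import reals.
Set Implicit Arguments.
Unset Strict Implicit.
Unset Printing Implicit Defensive.
Import Order.TTheory GRing.Theory Num.Theory.
Local Open Scope ring_scope.

Definition ncomp (V : finType) (r : rel V) : nat :=
  n_comp (fun x y => r x y || r y x) (@predT V).

Definition aff_indep (R : fieldType) (d n : nat) (Q : 'I_n -> 'rV[R]_d) : Prop :=
  forall c : 'I_n -> R,
    \sum_i c i = 0 -> \sum_i c i *: Q i = 0 -> forall i, c i = 0.

(* The ideal point p_ij of the line Q_iQ_j is the
   direction Q_j - Q_i; the projective span of a set of ideal points has
   dimension (linear rank of the directions) - 1.  A set of unordered pairs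
   {i,j} (i <> j) is represented by a set of ordered pairs with distinct
   coordinates (orientation is irrelevant for span and components). *)
Definition ideal_gen_pos (R : fieldType) (d n : nat) (Q : 'I_n -> 'rV[R]_d) : Prop :=
  injective Q /\
  forall T : {set 'I_n * 'I_n},
    (forall p, p \in T -> p.1 != p.2) ->
    \rank (\sum_(p in T) <<Q p.2 - Q p.1>>)%MS
      = minn (n - ncomp (fun x y => (x, y) \in T)) d.

Section GainGraph.
(* A gain graph on V = 'I_n: finite edge type E, each edge e oriented as
   ends e = (i, j) with i <> j and gain phi e = phi(e; i, j);
   phi(e; j, i) = - phi e. *)
Variables (R : realType) (n : nat) (E : finType)
  (ends : E -> 'I_n * 'I_n) (phi : E -> R).

Definition ogain (e : E) (i j : 'I_n) : R :=
  if ends e == (i, j) then phi e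
  else if ends e == (j, i) then - phi e else 0.

(* the circle with vertex sequence vs = [v_0; ...; v_{k-1}] and edge
   sequence es, edge es_m joining v_m and v_{m+1 mod k}, inside S *)
Definition circle_in (S : {set E}) (vs : seq 'I_n) (es : seq E) : Prop :=
  [/\ (2 <= size vs)%N, size es = size vs, uniq vs & uniq es] /\
  (forall e, e \in es -> e \in S) /\
      (forall x, x \in zip es (zip vs (rot 1 vs)) ->
         (ends x.1 == x.2) || (ends x.1 == (x.2.2, x.2.1))).

Definition circle_gain (vs : seq 'I_n) (es : seq E) : R :=
  \sum_(x <- zip es (zip vs (rot 1 vs))) ogain x.1 x.2.1 x.2.2.

Definition balanced (S : {set E}) : Prop :=
  forall vs es, circle_in S vs es -> circle_gain vs es = 0.

Definition adjS (S : {set E}) : rel 'I_n :=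
  fun x y => [exists e in S, (ends e == (x, y)) || (ends e == (y, x))].

Definition balanced_flat (S : {set E}) : Prop :=
  balanced S /\
  forall e, e \notin S -> connect (adjS S) (ends e).1 (ends e).2 ->
    ~ balanced (e |: S).

Definition flat_rank (S : {set E}) : nat := n - ncomp (adjS S).

Variables (d : nat) (Q : 'I_n -> 'rV[R]_d).

Definition sqnorm (v : 'rV[R]_d) : R := \sum_k v 0 k ^+ 2.

Definition psi (i j : 'I_n) (P : 'rV[R]_d) : R :=
  sqnorm (P - Q i) - sqnorm (P - Q j).

Definition hyp (e : E) (P : 'rV[R]_d) : Prop := psi (ends e).1 (ends e).2 P = phi e.

Definition inL (s : 'rV[R]_d -> Prop) : Prop :=
  (exists F : {set E}, forall P, s P <-> (forall e, e \in F -> hyp e P)) /\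
  (exists P, s P).

Definition edges_of (s : 'rV[R]_d -> Prop) (e : E) : Prop :=
  forall P, s P -> hyp e P.

(* s |-> E(s) is a poset isomorphism from L(H) (reverse inclusion) onto the
   balanced flats of rank <= d (inclusion). *)
Definition gen_pos_wrt : Prop :=
  [/\ (forall s, inL s -> exists S : {set E},
          (forall e, e \in S <-> edges_of s e) /\
          balanced_flat S /\ (flat_rank S <= d)%N),
      (forall S : {set E}, balanced_flat S -> (flat_rank S <= d)%N ->
          exists s, inL s /\ (forall e, e \in S <-> edges_of s e)) &
      (forall s t, inL s -> inL t ->
          ((forall P, t P -> s P) <->
           (forall e, edges_of s e -> edges_of t e)))].

End GainGraph.

(* Main.v *)
Require Import Defs.
From HB Require Import structures.
From mathcomp Require Import all_boot all_order all_algebra.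
From mathcomp Require Import reals boolp ring lra zify.
Import GRing.Theory Num.Theory.
Local Open Scope ring_scope.
Set Implicit Arguments.
Unset Strict Implicit.

Lemma mem_zip1 (S T : eqType) (s : seq S) (t : seq T) x :
  x \in zip s t -> x.1 \in s.
Proof.
elim: s t => [|a s IH] [|c t] //=; rewrite !inE => /orP [/eqP -> | /IH ->] //.
  by rewrite eqxx.
by rewrite orbT.
Qed.
Arguments mem_zip1 {S T s t x}.

Section Gain.
Variables (R : realType) (n : nat) (E : finType)
  (ends : E -> 'I_n * 'I_n) (phi : E -> R).

Definition pot (S : {set E}) (b : 'I_n -> R) :=
  forall e, e \in S -> phi e = b (ends e).1 - b (ends e).2.

Lemma ogain_pot S b e u v : pot S b -> e \in S ->
  (ends e == (u, v)) || (ends e == (v, u)) -> ogain ends phi e u v = b u - b v.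
Proof.
move=> hb eS; rewrite /ogain (hb e eS); case: eqP => [-> //|_] /= /eqP he.
by rewrite he eqxx /= opprB.
Qed.
Arguments ogain_pot {S b e u v}.

Lemma tele (b : 'I_n -> R) (vs : seq 'I_n) :
  \sum_(x <- zip vs (rot 1 vs)) (b x.1 - b x.2) = 0.
Proof.
rewrite big_split /= sumrN -(big_map fst xpredT b) -(big_map snd xpredT b).
have -> : map fst (zip vs (rot 1 vs)) = vs by rewrite -/(unzip1 _) unzip1_zip // size_rot.
have -> : map snd (zip vs (rot 1 vs)) = rot 1 vs by rewrite -/(unzip2 _) unzip2_zip // size_rot.
have pr : perm_eq (rot 1 vs) vs by rewrite perm_rot.
by rewrite (perm_big _ pr) subrr.
Qed.

Lemma gain_split b vs es : size es = size vs ->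
  circle_gain ends phi vs es =
  \sum_(x <- zip es (zip vs (rot 1 vs))) (ogain ends phi x.1 x.2.1 x.2.2 - (b x.2.1 - b x.2.2)).
Proof.
move=> sz; rewrite sumrB.
rewrite -(big_map snd xpredT (fun y => b y.1 - b y.2)).
have -> : map snd (zip es (zip vs (rot 1 vs))) = zip vs (rot 1 vs).
  by rewrite -/(unzip2 _) unzip2_zip // size_zip size_rot minnn sz.
by rewrite tele subr0.
Qed.

Lemma pot_balanced S b : pot S b -> balanced ends phi S.
Proof.
move=> hb vs es [[_ sz _ _] [esS adj]]; rewrite (gain_split b) // big_seq big1 //.
case=> e [u v] xin; rewrite /= (ogain_pot hb (esS _ (mem_zip1 xin)) (adj _ xin)).
by rewrite subrr.
Qed.

Lemma adjS_sym S : symmetric (adjS ends S).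
Proof. by move=> x y; apply: eq_existsb => e; rewrite orbC. Qed.

Lemma adjS_csym S : connect_sym (adjS ends S).
Proof. exact/sym_connect_sym/adjS_sym. Qed.

Lemma pot_connect S b b' x y : pot S b -> pot S b' ->
  connect (adjS ends S) x y -> b x - b' x = b y - b' y.
Proof.
move=> hb hb' /connectP [p pth ->]; elim: p x pth => [|z p IH] x //=.
case/andP => /existsP [e /andP [eS /orP [] /eqP he]] pth; rewrite -(IH z pth);
  have := hb e eS; have := hb' e eS; rewrite he /= => h1 h2; lra.
Qed.

Lemma edge_connect {S : {set E}} {e} : e \in S -> connect (adjS ends S) (ends e).1 (ends e).2.
Proof.
by move=> eS; apply: connect1; apply/existsP; exists e; rewrite eS -surjective_pairing eqxx.
Qed.

Lemma balanced_sub (S1 S2 : {set E}) : S1 \subset S2 -> balanced ends phi S2 -> balanced ends phi S1.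
Proof.
move=> sub bal vs es [h1 [h2 h3]]; apply: bal; split => //; split => // e /h2.
exact: (subsetP sub).
Qed.

Definition pe (S : {set E}) (e0 : E) (x y : 'I_n) :=
  odflt e0 [pick e' in S | (ends e' == (x, y)) || (ends e' == (y, x))].

Lemma peP {S : {set E}} e0 {x y} : adjS ends S x y ->
  pe S e0 x y \in S /\ ((ends (pe S e0 x y) == (x, y)) || (ends (pe S e0 x y) == (y, x))).
Proof.
rewrite /pe; case: pickP => [e' /andP [h1 h2] _ | none] //=.
by case/existsP => e' h; have := none e'; rewrite /= h.
Qed.

Fixpoint pedges (S : {set E}) (e0 : E) (x : 'I_n) (p : seq 'I_n) : seq E :=
  if p is y :: p' then pe S e0 x y :: pedges S e0 y p' else [::].

Lemma pedges_props (S : {set E}) e0 x p : path (adjS ends S) x p ->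
  [/\ size (pedges S e0 x p) = size p,
      forall w, w \in zip (pedges S e0 x p) (zip (x :: p) p) ->
        (ends w.1 == w.2) || (ends w.1 == (w.2.2, w.2.1)),
      {subset pedges S e0 x p <= S},
      forall f, f \in pedges S e0 x p -> (ends f).1 \in x :: p /\ (ends f).2 \in x :: p
    & uniq (x :: p) -> uniq (pedges S e0 x p)].
Proof.
elim: p x => [|y p IH] x /=; first by split.
case/andP => adj pth; have [s1 s2 s3 s4 s5] := IH y pth.
have [f0S f0e] := peP e0 adj.
split.
- by rewrite s1.
- move=> w; rewrite inE => /orP [/eqP -> | /s2] //=.
- by move=> f; rewrite inE => /orP [/eqP -> | /s3].
- move=> f; rewrite inE => /orP [/eqP -> | /s4 [h1 h2]]; last by split; rewrite in_cons ?h1 ?h2 orbT.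
  by case/orP: f0e => /eqP ->; rewrite /= !inE !eqxx ?orbT.
- rewrite inE negb_or => /andP [/andP [xy xp] uq].
  rewrite (s5 uq) andbT; apply/negP => /s4 [h1 h2].
  case/orP: f0e => /eqP he; rewrite he /= in h1 h2.
    by move: h1; rewrite inE (negbTE xy) (negbTE xp).
  by move: h2; rewrite inE (negbTE xy) (negbTE xp).
Qed.

Lemma zip_close (x : 'I_n) p z :
  zip (x :: p) (rcons p z) = rcons (zip (x :: p) p) (last x p, z).
Proof. by elim: p x => [|y p IH] x //=; rewrite IH. Qed.

Hypothesis noloop : forall e, (ends e).1 != (ends e).2.

Lemma circle_exists {S : {set E}} {e b} : e \notin S -> pot S b ->
  connect (adjS ends S) (ends e).2 (ends e).1 ->
  exists vs es, circle_in ends (e |: S) vs es /\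
    circle_gain ends phi vs es = phi e - (b (ends e).1 - b (ends e).2).
Proof.
move=> eS hb /connectP [p0 pth0 hi].
have [p [pth uq lp]] : exists p, [/\ path (adjS ends S) (ends e).2 p,
    uniq ((ends e).2 :: p) & last (ends e).2 p = (ends e).1].
  rewrite hi; case: (shortenP pth0) => p' a b' _; by exists p'.
have [s1 s2 s3 s4 s5] := @pedges_props S e _ _ pth.
have pne : p != [::] by case: p lp {pth uq s1 s2 s3 s4 s5} => //= h; by move: (noloop e); rewrite h eqxx.
set pes := pedges S e (ends e).2 p.
have zipE : zip (rcons pes e) (zip ((ends e).2 :: p) (rot 1 ((ends e).2 :: p))) =
    rcons (zip pes (zip ((ends e).2 :: p) p)) (e, ((ends e).1, (ends e).2)).
  rewrite rot1_cons zip_close lp zip_rcons // size2_zip ?s1 //= leqnSn.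
exists ((ends e).2 :: p), (rcons pes e); split.
  split; first split.
  - by case: p pne {pth uq s1 s2 s3 s4 s5 lp zipE pes}.
  - by rewrite size_rcons s1.
  - exact: uq.
  - rewrite rcons_uniq s5 // andbT; apply/negP => /s3; by rewrite (negbTE eS).
  split.
    by move=> f; rewrite mem_rcons !inE => /orP [-> //| /s3 ->]; rewrite orbT.
  move=> w; rewrite zipE mem_rcons inE => /orP [/eqP -> | /s2] //=.
  by rewrite -surjective_pairing eqxx.
rewrite (gain_split b); last by rewrite size_rcons s1.
rewrite zipE big_rcons /= big_seq big1 ?add0r.
  by rewrite /ogain -surjective_pairing eqxx.
case=> f [u v] xin; have fS := s3 _ (mem_zip1 xin).
by rewrite /= (ogain_pot hb fS (s2 _ xin)) subrr.
Qed.

Lemma balanced_pot S : balanced ends phi S -> exists b, pot S b.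
Proof.
elim: {S}_.+1 {-2}S (ltnSn #|S|) => // m IH S szS bal.
case: (set_0Vmem S) => [-> | [e eS]].
  by exists (fun _ => 0) => f; rewrite inE.
set S' := S :\ e.
have szS' : (#|S'| < m)%N by move: szS; rewrite (cardsD1 e S) eS.
have balS' : balanced ends phi S' by apply: balanced_sub bal; apply: subsetDl.
have [b' hb'] := IH S' szS' balS'.
have eS' : e \notin S' by rewrite setD11.
have SE : e |: S' = S by rewrite setD1K.
case: (boolP (connect (adjS ends S') (ends e).2 (ends e).1)) => conn.
  have [vs [es [circ g]]] := circle_exists eS' hb' conn.
  rewrite SE in circ; have := bal _ _ circ; rewrite g => /eqP; rewrite subr_eq0 => /eqP he.
  exists b' => f fS; case: (f =P e) => [-> //| fe]; apply: hb'.
  by rewrite !inE fS andbT; apply/eqP.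
pose c := phi e - (b' (ends e).1 - b' (ends e).2).
pose K x := connect (adjS ends S') (ends e).1 x.
exists (fun x => b' x + (if K x then c else 0)) => f fS.
case: (f =P e) => [-> | fe].
  have -> : K (ends e).1 by apply: connect0.
  have -> : K (ends e).2 = false.
    by apply/negbTE; apply: contra conn; rewrite adjS_csym.
  rewrite /c; lra.
have fS' : f \in S' by rewrite !inE fS andbT; apply/eqP.
have ec := edge_connect fS'.
have -> : K (ends f).2 = K (ends f).1.
  rewrite /K; apply/idP/idP => h; first by apply: connect_trans h _; rewrite adjS_csym.
  exact: connect_trans h ec.
rewrite (hb' f fS'); lra.
Qed.

End Gain.

Lemma ncomp_pos (V : finType) (r : rel V) (x : V) : (0 < ncomp r)%N.
Proof.
rewrite /ncomp; apply/card_gt0P.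
have cs : connect_sym (fun x y => r x y || r y x).
  by apply: sym_connect_sym => a b; rewrite orbC.
by exists (fingraph.root (fun x y => r x y || r y x) x); rewrite inE /= (fingraph.roots_root cs).
Qed.

Section Geo.
Variables (R : realType) (n d : nat) (Q : 'I_n -> 'rV[R]_d).
Hypothesis aQ : aff_indep Q.

Definition Qm : 'M[R]_(n, d) := \matrix_(i, k) Q i 0 k.
Definition onesc : 'M[R]_(n, 1) := const_mx 1.
Definition Mx := row_mx Qm onesc.

Lemma kill (v : 'rV_n) : v *m Qm = 0 -> v *m onesc = 0 -> v = 0.
Proof.
move=> h1 h2; apply/rowP => i; rewrite mxE.
apply: (@aQ (fun i => v 0 i)).
  transitivity ((v *m onesc) 0 0); last by rewrite h2 mxE.
  by rewrite mxE; apply: eq_bigr => j _; rewrite mxE mulr1.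
apply/rowP => k; rewrite summxE.
transitivity ((v *m Qm) 0 k); last by rewrite h1.
by rewrite mxE; apply: eq_bigr => j _; rewrite !mxE.
Qed.

Lemma Mx_free : row_free Mx.
Proof.
apply: inj_row_free => v; rewrite mul_mx_row -row_mx0 => /eq_row_mx [h1 h2].
exact: kill.
Qed.

Lemma n_le : (n <= d + 1)%N.
Proof. by have := Mx_free; rewrite /row_free => /eqP <-; apply: rank_leq_col. Qed.

Lemma solve_lin (c : 'I_n -> R) :
  exists (P : 'rV[R]_d) u, forall i, \sum_k P 0 k * Q i 0 k + u = c i.
Proof.
have full : row_full Mx^T by rewrite /row_full mxrank_tr; exact: Mx_free.
have /submxP [D hD] := submx_full (\row_i c i) full.
rewrite -[X in X *m _](hsubmxK D) tr_row_mx mul_row_col in hD.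
exists (lsubmx D), (rsubmx D 0 0) => i.
have := congr1 (fun M : 'M[R]_(1,n) => M 0 i) hD.
rewrite !mxE => ->.
rewrite big_ord1 !mxE mulr1; congr (_ + _).
by apply: eq_bigr => k _; rewrite !mxE.
Qed.

Lemma sqnormE (P q : 'rV[R]_d) :
  sqnorm (P - q) = sqnorm P - 2 * \sum_k P 0 k * q 0 k + sqnorm q.
Proof.
rewrite /sqnorm mulr_sumr -sumrB -big_split /=.
by apply: eq_bigr => k _; rewrite !mxE; ring.
Qed.

Lemma solveG (b : 'I_n -> R) :
  exists P t, forall i, sqnorm (P - Q i) = b i + t.
Proof.
have [P [u hP]] := solve_lin (fun i => (sqnorm (Q i) - b i) / 2).
exists P, (sqnorm P + 2 * u) => i.
rewrite sqnormE.
have -> : \sum_k P 0 k * Q i 0 k = (sqnorm (Q i) - b i) / 2 - u.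
  by rewrite -(hP i) addrK.
by field.
Qed.

End Geo.

Section GenPos.
Variables (R : realType) (n d : nat) (Q : 'I_n -> 'rV[R]_d).
Hypothesis aQ : aff_indep Q.
Variables (E : finType) (ends : E -> 'I_n * 'I_n) (phi : E -> R).
Hypothesis noloop : forall e, (ends e).1 != (ends e).2.

Definition GP (P : 'rV[R]_d) (i : 'I_n) := sqnorm (P - Q i).

Lemma hypE e P : hyp ends phi Q e P <-> phi e = GP P (ends e).1 - GP P (ends e).2.
Proof. by rewrite /hyp /psi /GP; split => ->. Qed.

Lemma hyp_pot (S : {set E}) P :
  (forall e, e \in S -> hyp ends phi Q e P) <-> pot ends phi S (GP P).
Proof. by split => h e eS; [apply/hypE/h | apply/hypE/h]. Qed.

Lemma rank_le (S : {set E}) : (flat_rank ends S <= d)%N.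
Proof.
rewrite /flat_rank; have := n_le aQ; case: (posnP n) => [n0 | npos]; first lia.
have := ncomp_pos (adjS ends S) (Ordinal npos); lia.
Qed.

Lemma gen_pos_main : gen_pos_wrt ends phi Q.
Proof.
split.
- move=> s [[F hF] [P0 sP0]].
  pose S := [set e | `[< edges_of ends phi Q s e >]].
  have SE : forall e, e \in S <-> edges_of ends phi Q s e.
    by move=> e; rewrite inE; split => /asboolP.
  have potP : forall P, s P -> pot ends phi S (GP P).
    by move=> P sP e /SE h; apply/hypE/h.
  exists S; split => //; split; last exact: rank_le.
  split; first exact: pot_balanced (potP P0 sP0).
  move=> e eS conn bal.
  have conn' : connect (adjS ends S) (ends e).2 (ends e).1 by rewrite adjS_csym.
  have [vs [es [circ g]]] := circle_exists noloop eS (potP P0 sP0) conn'.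
  have g0 := bal vs es circ; rewrite g0 in g.
  move/negP: eS; apply; apply/SE => P sP; apply/hypE.
  have := pot_connect (potP P sP) (potP P0 sP0) conn; lra.
- move=> S [bal flat] _.
  pose s := fun P => forall e, e \in S -> hyp ends phi Q e P.
  have [b hb] := balanced_pot noloop bal.
  have [P0 [t0 h0]] := solveG aQ b.
  have sP0 : s P0.
    apply/hyp_pot => e eS; rewrite /GP !h0 (hb e eS); lra.
  exists s; split; first by split; [exists S | exists P0].
  move=> e; split; first by move=> eS P sP; exact: sP e eS.
  move=> hE; apply/negPn/negP => eS.
  have he0 := hE P0 sP0; move/hypE: he0 => he0.
  case: (boolP (connect (adjS ends S) (ends e).1 (ends e).2)) => conn.
    apply: (flat e eS conn); apply: (pot_balanced (b := GP P0)) => f.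
    rewrite !inE => /orP [/eqP -> // | fS].
    by have /hyp_pot := sP0; apply.
  pose K x := connect (adjS ends S) (ends e).1 x.
  pose b' x := GP P0 x + (if K x then 1 else 0).
  have [P [t h]] := solveG aQ b'.
  have sP : s P.
    apply/hyp_pot => f fS; rewrite /GP !h /b' -/(GP _ _).
    have -> : K (ends f).2 = K (ends f).1.
      have ec := edge_connect ends fS.
      rewrite /K; apply/idP/idP => hh; first by apply: connect_trans hh _; rewrite adjS_csym.
      exact: connect_trans hh ec.
    have /hyp_pot := sP0; move/(_ f fS) => ->; rewrite /GP; lra.
  have := hE P sP; move/hypE; rewrite /GP !h /b' -!/(GP _ _).
  have -> : K (ends e).1 by apply: connect0.
  have -> : K (ends e).2 = false by apply/negbTE.
  rewrite he0; lra.
- move=> s1 t [[F hF] _] _; split.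
    by move=> ts e he P tP; exact: he P (ts P tP).
  move=> he P tP; apply/hF => e eF; apply: (he e _ P tP).
  by move=> P' sP'; exact: (proj1 (hF P') sP' e eF).
Qed.

End GenPos.

Section Ideal.
Variables (F : fieldType) (n d : nat) (Q : 'I_n -> 'rV[F]_d).
Hypothesis aQ : aff_indep Q.

Definition QmI : 'M[F]_(n, d) := \matrix_(i, k) Q i 0 k.
Definition onesI : 'M[F]_(n, 1) := const_mx 1.

Lemma killI (v : 'rV_n) : v *m QmI = 0 -> v *m onesI = 0 -> v = 0.
Proof.
move=> h1 h2; apply/rowP => i; rewrite mxE.
apply: (@aQ (fun i => v 0 i)).
  transitivity ((v *m onesI) 0 0); last by rewrite h2 mxE.
  by rewrite mxE; apply: eq_bigr => j _; rewrite mxE mulr1.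
apply/rowP => k; rewrite summxE.
transitivity ((v *m QmI) 0 k); last by rewrite h1.
by rewrite mxE; apply: eq_bigr => j _; rewrite !mxE.
Qed.

Lemma Q_inj : injective Q.
Proof.
move=> i j hij; apply/eqP/negPn/negP => nij.
pose c := fun k : 'I_n => (k == i)%:R - (k == j)%:R : F.
have s0 : forall l : 'I_n, \sum_k ((k == l)%:R : F) = 1.
  move=> l; rewrite (bigD1 l) //= eqxx big1 ?addr0 // => k /negbTE ->.
  by [].
have s1 : forall l : 'I_n, \sum_k ((k == l)%:R : F) *: Q k = Q l.
  move=> l; rewrite (bigD1 l) //= eqxx scale1r big1 ?addr0 // => k /negbTE ->.
  by rewrite scale0r.
have h1 : \sum_k c k = 0 by rewrite /c sumrB !s0 subrr.
have h2 : \sum_k c k *: Q k = 0.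
  rewrite /c; under eq_bigr => k _ do rewrite scalerBl.
  by rewrite sumrB !s1 hij subrr.
have := aQ h1 h2 i; rewrite /c eqxx (negbTE nij) subr0 => /eqP.
by rewrite oner_eq0.
Qed.

Lemma rowQ j : row j QmI = Q j.
Proof. by apply/rowP => k; rewrite !mxE. Qed.

Lemma ideal_rank (T : {set 'I_n * 'I_n}) :
  (forall p, p \in T -> p.1 != p.2) ->
  \rank (\sum_(p in T) <<Q p.2 - Q p.1>>)%MS
    = (n - ncomp (fun x y => (x, y) \in T))%N.
Proof.
move=> noloop.
pose vT (p : 'I_n * 'I_n) : 'rV[F]_n := 'e_(p.2) - 'e_(p.1).
pose U := (\sum_(p in T) <<vT p>>)%MS.
have DE : (U *m QmI :=: \sum_(p in T) <<Q p.2 - Q p.1>>)%MS.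
  apply: eqmx_trans (sumsmxMr_gen _ _ _) _; apply: eqmx_sums => p _.
  apply: eqmx_trans (genmxE _) _.
  apply: eqmx_trans (eqmxMr QmI (genmxE _)) _.
  by rewrite /vT mulmxBl -!rowE !rowQ; apply: eqmx_sym; apply: genmxE.
have Uones : (U <= kermx onesI)%MS.
  apply/sumsmx_subP => p _; rewrite genmxE; apply/sub_kermxP.
  by rewrite /vT mulmxBl -!rowE !row_const subrr.
have cap0 : \rank (U :&: kermx QmI)%MS = 0%N.
  apply/eqP; rewrite mxrank_eq0; apply/eqP/row_matrixP => r; rewrite row0.
  apply: killI; apply/sub_kermxP; apply: submx_trans (row_sub r _) _.
    exact: capmxSr.
  exact: submx_trans (capmxSl _ _) Uones.
have rkD : \rank (\sum_(p in T) <<Q p.2 - Q p.1>>)%MS = \rank U.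
  have := mxrank_mul_ker U QmI; rewrite cap0 addn0 => <-.
  by apply/esym/eqmx_rank/eqmxP.
rewrite rkD.
pose r' := fun x y => ((x, y) \in T) || ((y, x) \in T).
have cs : connect_sym r' by apply: sym_connect_sym => x y; rewrite /r' orbC.
pose rt := fingraph.root r'.
pose Rt := [set x | fingraph.roots r' x].
have cE : ncomp (fun x y => (x, y) \in T) = #|Rt|.
  by rewrite /ncomp /n_comp_mem; apply: eq_card => x; rewrite !inE andbT.
rewrite cE.
pose Ind : 'M[F]_(#|Rt|, n) := \matrix_(k, x) (rt x == enum_val k)%:R.
have rtR : forall x, rt x \in Rt by move=> x; rewrite inE (fingraph.roots_root cs).
have evR : forall k : 'I_#|Rt|, rt (enum_val k) = enum_val k.
  by move=> k; have := enum_valP k; rewrite inE => /eqP.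
have Ifree : row_free Ind.
  apply: inj_row_free => y h; apply/rowP => k; rewrite mxE.
  have := congr1 (fun M : 'M[F]_(1, n) => M 0 (enum_val k)) h; rewrite !mxE => <-.
  rewrite (bigD1 k) //= !mxE evR eqxx mulr1 big1 ?addr0 // => k' nk.
  rewrite !mxE evR; case: eqP => [/enum_val_inj hk | _]; last by rewrite mulr0.
  by rewrite hk eqxx in nk.
have Isub : (Ind <= kermx U^T)%MS.
  apply/sub_kermxP; apply: trmx_inj; rewrite trmx_mul trmxK trmx0.
  apply/sub_kermxP/sumsmx_subP => p pT; rewrite genmxE; apply/sub_kermxP.
  rewrite /vT mulmxBl -!rowE; apply/eqP; rewrite subr_eq0; apply/eqP/rowP => k.
  have hc : connect r' p.1 p.2 by apply: connect1; rewrite /r' -surjective_pairing pT.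
  by rewrite !mxE /rt (fingraph.rootP cs hc).
have Ksub : (kermx U^T <= Ind)%MS.
  apply/row_subP => q; set w := row q (kermx U^T).
  have hw : w *m U^T = 0 by apply/sub_kermxP; apply: submx_trans (row_sub _ _) _.
  clearbody w.
  have step : forall p, p \in T -> w 0 p.2 = w 0 p.1.
    move=> p pT; have : (vT p <= U)%MS by apply: (sumsmx_sup p) => //; rewrite genmxE.
    case/submxP => X hX.
    have h0 : vT p *m w^T = 0.
      rewrite hX -mulmxA; have -> : U *m w^T = (w *m U^T)^T by rewrite trmx_mul trmxK.
      by rewrite hw trmx0 mulmx0.
    have := congr1 (fun M : 'M[F]_(1, 1) => M 0 0) h0.
    rewrite /vT mulmxBl -!rowE !mxE => /eqP; rewrite subr_eq0 => /eqP.
    by [].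
  have wc : forall x y, connect r' x y -> w 0 x = w 0 y.
    move=> x y /connectP [pp pth ->]; elim: pp x pth => [|z pp IH] x //=.
    case/andP => /orP [] hT pth; rewrite -(IH z pth).
      by rewrite -(step _ hT).
    by rewrite (step _ hT).
  apply/submxP; exists (\row_k w 0 (enum_val k)); apply/rowP => x.
  rewrite !mxE (bigD1 (enum_rank_in (rtR x) (rt x))) //= !mxE.
  rewrite enum_rankK_in ?rtR // eqxx mulr1 big1 ?addr0.
    by apply: wc; apply: fingraph.connect_root.
  move=> k nk; rewrite !mxE; case: eqP => [hk | _]; last by rewrite mulr0.
  exfalso; move/negP: nk; apply; apply/eqP/enum_val_inj.
  by rewrite enum_rankK_in ?rtR.
have rkK : \rank (kermx U^T) = #|Rt|.
  have rI : \rank Ind = #|Rt| := eqP Ifree.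
  have l1 := mxrankS Ksub; have l2 := mxrankS Isub; rewrite rI in l1 l2.
  by apply/eqP; rewrite eqn_leq l1 l2.
have := mxrank_ker U^T; rewrite rkK mxrank_tr => ->.
by rewrite subKn // rank_leq_row.
Qed.


End Ideal.

Unset Implicit Arguments.

Theorem proposition6p9 (R : realType) (d n : nat) (Q : 'I_n -> 'rV[R]_d) :
  aff_indep Q ->
  ideal_gen_pos Q /\
  (forall (E : finType) (ends : E -> 'I_n * 'I_n) (phi : E -> R),
     (forall e, (ends e).1 != (ends e).2) ->
     gen_pos_wrt ends phi Q).
Proof.
move=> aQ; split.
  split; first exact: Q_inj aQ.
  move=> T hT; rewrite ideal_rank //; apply/esym/minn_idPl.
  rewrite -(ideal_rank aQ hT); exact: rank_leq_col.
by move=> E ends phi noloop; apply: gen_pos_main.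
Qed.
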